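(* Let $m\ge 2$. For all $\lambda\in\mathbb{C}$ one has $(T^*_\lambda)^\vee=\underline{\omega}\,T^*_\lambda={}^sU^*_\lambda$ and $(U^*_\lambda)^\vee=\underline{\omega}\,U^*_\lambda=-\,{}^sT^*_\lambda$.
   Context: $\mathbb{R}_{0,m}$ is the real Clifford algebra generated by an orthonormal basis $e_1,\dots,e_m$ with $e_j^2=-1$, $e_ie_j=-e_je_i$ ($i\ne j$); $\underline{x}=\sum_je_jx_j$, $r=|\underline{x}|$, $\underline{\omega}=\underline{x}/r$, $\underline{\partial}=\sum_je_j\partial_{x_j}$, $a_m=2\pi^{m/2}/\Gamma(m/2)$, $\delta(\underline{x})$ the Dirac delta; distributions are (complexified) $\mathbb{R}_{0,m}$-valued. Signumdistributions: $\Omega(\mathbb{R}^m)=\{\underline{\omega}\varphi:\varphi\in\mathcal{D}(\mathbb{R}^m)\}$ with the topology transported from $\mathcal{D}(\mathbb{R}^m)$ by $\varphi\mapsto\underline{\omega}\varphi$; signumdistributions are the continuous linear functionals on $\Omega(\mathbb{R}^m)$. For a distribution $T$, $T^\vee=\underline{\omega}\,T$ is the signumdistribution with $\langle T^\vee,\underline{\omega}\varphi\rangle=-\langle T,\varphi\rangle$ for all $\varphi\in\mathcal{D}(\mathbb{R}^m)$; for any distribution $S$, $\underline{\omega}\,S$ means $S^\vee$ (e.g. $\underline{\omega}\,\underline{\partial}^k\delta(\underline{x}):=(\underline{\partial}^k\delta(\underline{x}))^\vee$). Finite part: for $\mu\notin\{-1,-2,\dots\}$, $\langle \mathrm{Fp}\,r_+^\mu,\phi\rangle=\lim_{\epsilon\to0+}\big(\int_\epsilon^\infty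 r^\mu\phi\,dr+\sum_{k=0}^{n-1}\frac{\phi^{(k)}(0)}{k!}\frac{\epsilon^{\mu+k+1}}{\mu+k+1}\big)$ ($\mathrm{Re}\,\mu>-n-1$); for $\mu=-n$ the monomial pseudofunction $\lim_{\epsilon\to0+}\big(\int_\epsilon^\infty r^{-n}\phi\,dr+\sum_{k=0}^{n-2}\frac{\phi^{(k)}(0)}{k!}\frac{\epsilon^{k-n+1}}{k-n+1}+\frac{\phi^{(n-1)}(0)}{(n-1)!}\ln\epsilon\big)$. Spherical means $\Sigma^0[\varphi](r)=\frac1{a_m}\int_{S^{m-1}}\varphi(r\underline{\omega})dS$, $\Sigma^1[\varphi](r)=\frac1{a_m}\int_{S^{m-1}}\underline{\omega}\varphi(r\underline{\omega})dS$. For all $\lambda\in\mathbb{C}$: distributions $\langle T_\lambda,\varphi\rangle=a_m\langle\mathrm{Fp}\,r_+^{\lambda+m-1},\Sigma^0[\varphi]\rangle$, $\langle U_\lambda,\varphi\rangle=a_m\langle\mathrm{Fp}\,r_+^{\lambda+m-1},\Sigma^1[\varphi]\rangle$; signumdistributions $\langle{}^sT_\lambda,\underline{\omega}\varphi\rangle=a_m\langle\mathrm{Fp}\,r_+^{\lambda+m-1},\Sigma^1[\varphi]\rangle$, $\langle{}^sU_\lambda,\underline{\omega}\varphi\rangle=-a_m\langle\mathrm{Fp}\,r_+^{\lambda+m-1},\Sigma^0[\varphi]\rangle$. Normalizations ($\ell\in\{0,1,\dots\}$): $T^*_\lambda=\pi^{\frac{\lambda+m}{2}}T_\lambda/\Gamma(\frac{\lambda+m}{2})$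 ($\lambda\ne-m-2\ell$), $T^*_{-m-2\ell}=\frac{\pi^{m/2-\ell}}{2^{2\ell}\Gamma(\frac m2+\ell)}\underline{\partial}^{2\ell}\delta(\underline{x})$; $U^*_\lambda=\pi^{\frac{\lambda+m+1}{2}}U_\lambda/\Gamma(\frac{\lambda+m+1}{2})$ ($\lambda\ne-m-2\ell-1$), $U^*_{-m-2\ell-1}=-\frac{\pi^{m/2-\ell}}{2^{2\ell+1}\Gamma(\frac m2+\ell+1)}\underline{\partial}^{2\ell+1}\delta(\underline{x})$; ${}^sT^*_\lambda=\pi^{\frac{\lambda+m+1}{2}}{}^sT_\lambda/\Gamma(\frac{\lambda+m+1}{2})$ ($\lambda\ne-m-2\ell-1$), ${}^sT^*_{-m-2\ell-1}=\frac{\pi^{m/2-\ell}}{2^{2\ell+1}\Gamma(\frac m2+\ell+1)}\underline{\omega}\,\underline{\partial}^{2\ell+1}\delta(\underline{x})$; ${}^sU^*_\lambda=\pi^{\frac{\lambda+m}{2}}{}^sU_\lambda/\Gamma(\frac{\lambda+m}{2})$ ($\lambda\ne-m-2\ell$), ${}^sU^*_{-m-2\ell}=\frac{\pi^{m/2-\ell}}{2^{2\ell}\Gamma(\frac m2+\ell)}\underline{\omega}\,\underline{\partial}^{2\ell}\delta(\underline{x})$. *)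

(* Defs.v *)
From HB Require Import structures.
From mathcomp Require Import all_boot all_order all_algebra.
From mathcomp Require Import all_classical all_reals all_analysis.
From mathcomp Require Import complex.
Import Order.TTheory GRing.Theory Num.Theory numFieldNormedType.Exports.

Set Implicit Arguments.
Unset Strict Implicit.
Unset Printing Implicit Defensive.

Local Open Scope classical_set_scope.
Local Open Scope ring_scope.
Local Open Scope complex_scope.

Section ComplexHelpers.
Variable R : realType.
Local Notation C := R[i].

(* r^z = exp(z ln r) for r > 0 and z complex *)
Definition cpow (r : R) (z : C) : C :=
  (expR (complex.Re z * ln r))%:C *
  (cos (complex.Im z * ln r) +i* sin (complex.Im z * ln r)).

Definition cint (D : set R) (g : R -> C) : C :=
  Rintegral (@lebesgue_measure R) D (fun x => complex.Re (g x)) +i*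
  Rintegral (@lebesgue_measure R) D (fun x => complex.Im (g x)).

Definition clim0 (g : R -> C) : C :=
  lim (complex.Re (g x) @[x --> 0^'+]) +i* lim (complex.Im (g x) @[x --> 0^'+]).

Definition cderivn (n : nat) (g : R -> C) (x : R) : C :=
  derive1n n (fun t => complex.Re (g t)) x +i*
  derive1n n (fun t => complex.Im (g t)) x.

(* Euler's Gamma function on C \ {0,-1,-2,...}:
   Gamma z = (int_0^oo t^(z+n-1) e^(-t) dt) / prod_(k<n) (z+k),
   for any n with Re z + n > 0 (here n = floor |Re z| + 1). *)
Definition cGamma (z : C) : C :=
  let n := (Num.truncn `|complex.Re z|).+1 in
  cint `]0, +oo[ (fun t => cpow t (z + n%:R - 1) * (expR (- t))%:C) /
  \prod_(k < n) (z + k%:R).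

End ComplexHelpers.

Section Clifford.
Variable R : realType.
Variable m : nat.
Local Notation C := R[i].

(* An element is the family of its coordinates on the blades e_A,
   A a subset of {1..m}, e_A = e_{a1} ... e_{ak} with a1 < ... < ak. *)
Local Notation clif := {ffun {set 'I_m} -> C}.

Definition blade (S : {set 'I_m}) : clif := [ffun T => (T == S)%:R].

(* e_A e_B = blade_sign A B e_{A symdiff B}   (e_j^2 = -1, e_i e_j = - e_j e_i) *)
Definition blade_sign (A B : {set 'I_m}) : C :=
  (-1) ^+ (#| [set p : 'I_m * 'I_m | (p.1 \in A) && (p.2 \in B) && (p.2 < p.1)%N] |
           + #|A :&: B|).

Definition clmul (x y : clif) : clif :=
  \sum_(A : {set 'I_m}) \sum_(B : {set 'I_m})
     (x A * y B * blade_sign A B) *: blade ((A :\: B) :|: (B :\: A)).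

Definition cle (j : 'I_m) : clif := blade [set j].

Definition clvec (x : 'rV[R]_m) : clif := \sum_(j < m) (x 0 j)%:C *: cle j.

Definition eucl (x : 'rV[R]_m) : R := Num.sqrt (\sum_(j < m) x 0 j ^+ 2).

(* underline omega = x / |x| (the value at the origin is irrelevant) *)
Definition omega (x : 'rV[R]_m) : clif := clvec ((eucl x)^-1 *: x).

Definition ej (i : 'I_m) : 'rV[R]_m := delta_mx 0 i.

Definition iter_partial (s : seq 'I_m) (f : 'rV[R]_m -> R) : 'rV[R]_m -> R :=
  foldr (fun i g => 'D_(ej i) g) f s.

Definition smooth_real (f : 'rV[R]_m -> R) : Prop :=
  forall s : seq 'I_m,
    continuous (iter_partial s f) /\
    forall (i : 'I_m) (x : 'rV[R]_m), derivable (iter_partial s f) x (ej i).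

Definition is_test (phi : 'rV[R]_m -> clif) : Prop :=
  (forall A : {set 'I_m},
      smooth_real (fun x => complex.Re (phi x A)) /\
      smooth_real (fun x => complex.Im (phi x A))) /\
  exists M : R, forall x, M < eucl x -> phi x = 0.

Definition cpartial (i : 'I_m) (phi : 'rV[R]_m -> clif) : 'rV[R]_m -> clif :=
  fun x => [ffun A =>
    'D_(ej i) (fun y => complex.Re (phi y A)) x +i*
    'D_(ej i) (fun y => complex.Im (phi y A)) x].

Definition distr := ('rV[R]_m -> clif) -> clif.

(* A signumdistribution S is given by phi |-> <S, omega phi>: since
   phi |-> omega phi is a bijection D(R^m) -> Omega(R^m) (and the topology
   of Omega is transported), this determines S. *)
Definition sdistr := ('rV[R]_m -> clif) -> clif.

Definition delta : distr := fun phi => phi 0.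

Definition ddirac (T : distr) : distr :=
  fun phi => - \sum_(j < m) clmul (cle j) (T (cpartial j phi)).

(* T^vee = omega T :  <T^vee, omega phi> = - <T, phi> *)
Definition vee (T : distr) : sdistr := fun phi => - T phi.

(* Lebesgue integral on R^m as iterated one-dimensional integrals *)
Definition int_coord (i : 'I_m) (f : 'rV[R]_m -> R) : 'rV[R]_m -> R :=
  fun x => Rintegral (@lebesgue_measure R) [set: R]
             (fun t => f (\row_k (if k == i then t else x 0 k))).

Definition int_Rm (f : 'rV[R]_m -> R) : R := foldr int_coord f (enum 'I_m) 0.

(* surface integral over S^{m-1}:  int_S g dS = m int_{|x|<=1} g(x/|x|) dx *)
Definition sph_int_R (g : 'rV[R]_m -> R) : R :=
  m%:R * int_Rm (fun x => if eucl x <= 1 then g ((eucl x)^-1 *: x) else 0).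

Definition sph_int (h : 'rV[R]_m -> clif) : clif :=
  [ffun A => sph_int_R (fun w => complex.Re (h w A)) +i*
             sph_int_R (fun w => complex.Im (h w A))].

Definition a_m : C := 2%:R * cpow pi (m%:R / 2) / cGamma (m%:R / 2).

Definition Sigma0 (phi : 'rV[R]_m -> clif) (r : R) : clif :=
  a_m^-1 *: sph_int (fun w => phi (r *: w)).
Definition Sigma1 (phi : 'rV[R]_m -> clif) (r : R) : clif :=
  a_m^-1 *: sph_int (fun w => clmul (clvec w) (phi (r *: w))).

Definition clim0c (F : R -> clif) : clif := [ffun A => clim0 (fun x => F x A)].
Definition cintc (D : set R) (F : R -> clif) : clif :=
  [ffun A => cint D (fun x => F x A)].
Definition cderivnc (n : nat) (F : R -> clif) (x : R) : clif :=
  [ffun A => cderivn n (fun r => F r A) x].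

(* finite part <Fp r_+^mu, f> *)
Definition Fp (mu : C) (f : R -> clif) : clif :=
  let n0 := Num.truncn (- complex.Re mu) in
  if (mu == - (n0%:R)) && (0 < n0)%N then
    (* mu = -n0, n0 >= 1: monomial pseudofunction *)
    clim0c (fun eps =>
      cintc `[eps, +oo[ (fun r => cpow r mu *: f r)
      + \sum_(k < n0.-1)
          ((k`!%:R)^-1 * cpow eps (k%:R - n0%:R + 1) / (k%:R - n0%:R + 1))
            *: cderivnc k f 0
      + (((n0.-1)`!%:R)^-1 * (ln eps)%:C) *: cderivnc n0.-1 f 0)
  else
    let n := (Num.truncn `|complex.Re mu|).+1 in   (* Re mu > -n-1 *)
    clim0c (fun eps =>
      cintc `[eps, +oo[ (fun r => cpow r mu *: f r)
      + \sum_(k < n)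
          ((k`!%:R)^-1 * cpow eps (mu + k%:R + 1) / (mu + k%:R + 1))
            *: cderivnc k f 0).

Definition Tl (lam : C) : distr :=
  fun phi => a_m *: Fp (lam + m%:R - 1) (Sigma0 phi).
Definition Ul (lam : C) : distr :=
  fun phi => a_m *: Fp (lam + m%:R - 1) (Sigma1 phi).
Definition sTl (lam : C) : sdistr :=
  fun phi => a_m *: Fp (lam + m%:R - 1) (Sigma1 phi).
Definition sUl (lam : C) : sdistr :=
  fun phi => - (a_m *: Fp (lam + m%:R - 1) (Sigma0 phi)).

(* Some l iff lam = -m-2l *)
Definition excT (lam : C) : option nat :=
  let l := ((Num.truncn (- complex.Re lam) - m)%N)./2 in
  if lam == - (((m + l.*2)%N)%:R) then Some l else None.
(* Some l iff lam = -m-2l-1 *)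
Definition excU (lam : C) : option nat :=
  let l := ((Num.truncn (- complex.Re lam) - m.+1)%N)./2 in
  if lam == - (((m + l.*2).+1)%N%:R) then Some l else None.

Definition Tstar (lam : C) : distr :=
  match excT lam with
  | Some l => fun phi =>
      (cpow pi (m%:R / 2 - l%:R) / (2 ^+ (l.*2) * cGamma (m%:R / 2 + l%:R)))
        *: iter l.*2 ddirac delta phi
  | None => fun phi =>
      (cpow pi ((lam + m%:R) / 2) / cGamma ((lam + m%:R) / 2)) *: Tl lam phi
  end.

Definition Ustar (lam : C) : distr :=
  match excU lam with
  | Some l => fun phi =>
      - ((cpow pi (m%:R / 2 - l%:R) /
           (2 ^+ (l.*2).+1 * cGamma (m%:R / 2 + l%:R + 1)))
        *: iter (l.*2).+1 ddirac delta phi)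
  | None => fun phi =>
      (cpow pi ((lam + m%:R + 1) / 2) / cGamma ((lam + m%:R + 1) / 2))
        *: Ul lam phi
  end.

Definition sTstar (lam : C) : sdistr :=
  match excU lam with
  | Some l => fun phi =>
      (cpow pi (m%:R / 2 - l%:R) /
         (2 ^+ (l.*2).+1 * cGamma (m%:R / 2 + l%:R + 1)))
        *: vee (iter (l.*2).+1 ddirac delta) phi
  | None => fun phi =>
      (cpow pi ((lam + m%:R + 1) / 2) / cGamma ((lam + m%:R + 1) / 2))
        *: sTl lam phi
  end.

Definition sUstar (lam : C) : sdistr :=
  match excT lam with
  | Some l => fun phi =>
      (cpow pi (m%:R / 2 - l%:R) / (2 ^+ (l.*2) * cGamma (m%:R / 2 + l%:R)))
        *: vee (iter l.*2 ddirac delta) phi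
  | None => fun phi =>
      (cpow pi ((lam + m%:R) / 2) / cGamma ((lam + m%:R) / 2)) *: sUl lam phi
  end.

Definition sdopp (S : sdistr) : sdistr := fun phi => - S phi.

End Clifford.

(* Main.v *)
Require Import Defs.
From HB Require Import structures.
From mathcomp Require Import all_boot all_order all_algebra.
From mathcomp Require Import all_classical all_reals all_analysis.
From mathcomp Require Import complex.
Import GRing.Theory.

Theorem lemma2 (R : realType) (m : nat) (hm : (2 <= m)%N) (lam : R[i]) :
  (forall phi : 'rV[R]_m -> {ffun {set 'I_m} -> R[i]}, is_test phi ->
     vee (Tstar lam) phi = sUstar lam phi) /\
  (forall phi : 'rV[R]_m -> {ffun {set 'I_m} -> R[i]}, is_test phi ->
     vee (Ustar lam) phi = sdopp (sTstar lam) phi).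
Proof.
split=> phi _; rewrite /vee /sdopp /Tstar /sUstar /Ustar /sTstar.
- by case: (excT m lam) => [l|]; rewrite /vee /sUl ?scalerN.
- by case: (excU m lam) => [l|]; rewrite /vee /Ul /sTl ?scalerN.
Qed.
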